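(* Let $f_0(i)=i$ for all $i\ge1$. Then for $1\le k\le n$, \[c_1(n,k)=\binom{n+k-1}{2k-1},\] and for every $m\ge1$, \[c_m(n,k)=\sum_{i=k}^n(m-1)^{i-k}\binom{i-1}{k-1}\binom{n+i-1}{2i-1}.\]
   Context: For $m\ge 1$, $f_m$ is the invert transform of $f_{m-1}$, i.e. $f_m(n)=f_{m-1}(n)+\sum_{i=1}^{n-1}f_{m-1}(i)f_m(n-i)$ for $n\ge1$. For $m\ge1$ the numbers $c_m(n,k)$, $0\le k\le n$, are defined by $c_m(0,0)=1$, $c_m(n,0)=0$ for $n\ge1$, and $c_m(n,k)=\sum_{i=1}^{n-k+1}f_{m-1}(i)\,c_m(n-i,k-1)$ for $1\le k\le n$. The convention $0^0=1$ is used. *)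

(* Defs.v *)
From mathcomp Require Import all_boot.
Set Implicit Arguments. Unset Strict Implicit. Unset Printing Implicit Defensive.

(* [inv_aux g n j] is the invert transform of [g] evaluated at [j], valid for
   [j <= n]:  a(j) = g(j) + \sum_{i=1}^{j-1} g(i) a(j-i)  (j >= 1). *)
Fixpoint inv_aux (g : nat -> nat) (n : nat) : nat -> nat :=
  match n with
  | 0 => fun _ => 0
  | n'.+1 =>
      let a := inv_aux g n' in
      fun j => if j <= n' then a j
               else g j + \sum_(1 <= i < j) g i * a (j - i)
  end.

Definition invert (g : nat -> nat) (n : nat) : nat := inv_aux g n n.

Definition fseq (f0 : nat -> nat) (m : nat) : nat -> nat := iter m invert f0.

Fixpoint cc (g : nat -> nat) (k : nat) (n : nat) : nat :=
  match k with
  | 0 => (n == 0)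
  | k'.+1 => \sum_(1 <= i < (n - k').+1) g i * cc g k' (n - i)
  end.

Definition cm (f0 : nat -> nat) (m n k : nat) : nat := cc (fseq f0 m.-1) k n.

(* Main.v *)
Require Import Defs.
From mathcomp Require Import all_boot zify.
From Stdlib Require Import FunctionalExtensionality.

Definition conv (a b : nat -> nat) : nat -> nat :=
  fun n => \sum_(i < n.+1) a i * b (n - i).
Definition addf (a b : nat -> nat) : nat -> nat := fun n => a n + b n.
Definition sclf (s : nat) (a : nat -> nat) : nat -> nat := fun n => s * a n.
Definition d0 : nat -> nat := fun n => (n == 0 : nat).
Definition F0 : nat -> nat := fun n => n.
Definition zf (g : nat -> nat) : nat -> nat := fun n => if n is 0 then 0 else g n.

Lemma convC a b : conv a b = conv b a.
Proof.
apply: functional_extensionality => n; rewrite /conv.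
rewrite (reindex_inj rev_ord_inj) /=; apply: eq_bigr => i _.
rewrite subSS subKn; [by rewrite mulnC | by rewrite -ltnS].
Qed.

Lemma triangle (F : nat -> nat -> nat) n :
  \sum_(i < n.+1) \sum_(j < (n - i).+1) F i j =
  \sum_(s < n.+1) \sum_(i < s.+1) F i (s - i).
Proof.
elim: n => [|n IH]; first by rewrite !big_ord_recl !big_ord0.
rewrite [RHS]big_ord_recr /= -IH.
rewrite (eq_bigr (fun i : 'I_n.+2 => \sum_(j < n.+1 - i) F i j + F i (n.+1 - i))); last first.
  by move=> i _; rewrite big_ord_recr.
rewrite big_split /=; congr (_ + _).
rewrite big_ord_recr /= subnn big_ord0 addn0.
apply: eq_bigr => i _; rewrite subSn //; by rewrite -ltnS.
Qed.

Lemma convA a b c : conv a (conv b c) = conv (conv a b) c.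
Proof.
apply: functional_extensionality => n; rewrite /conv.
rewrite (eq_bigr (fun i : 'I_n.+1 => \sum_(j < (n - i).+1) a i * (b j * c (n - i - j)))); last first.
  by move=> i _; rewrite big_distrr.
rewrite (triangle (fun i j => a i * (b j * c (n - i - j)))); apply: eq_bigr => s _.
rewrite big_distrl /=; apply: eq_bigr => i _.
have Hi := ltn_ord i; have Hs := ltn_ord s.
rewrite mulnA; congr (_ * c _); lia.
Qed.

Lemma convDr a b c : conv a (addf b c) = addf (conv a b) (conv a c).
Proof.
apply: functional_extensionality => n; rewrite /conv /addf -big_split /=.
by apply: eq_bigr => i _; rewrite mulnDr.
Qed.

Lemma convDl a b c : conv (addf a b) c = addf (conv a c) (conv b c).
Proof. by rewrite convC convDr !(convC c). Qed.

Lemma convZl s a b : conv (sclf s a) b = sclf s (conv a b).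
Proof.
apply: functional_extensionality => n; rewrite /conv /sclf big_distrr /=.
by apply: eq_bigr => i _; rewrite mulnA.
Qed.

Lemma convZr s a b : conv a (sclf s b) = sclf s (conv a b).
Proof. by rewrite convC convZl convC. Qed.

Lemma conv1 u : conv u d0 = u.
Proof.
apply: functional_extensionality => n; rewrite /conv /d0 big_ord_recr /= subnn muln1.
rewrite big1 // => i _; have Hi := ltn_ord i.
have -> : (n - i == 0) = false by apply/eqP; lia.
by rewrite muln0.
Qed.

Lemma conv_uniq u b X Y : u 0 = 0 -> X = addf b (conv u X) -> Y = addf b (conv u Y) -> X = Y.
Proof.
move=> u0 HX HY; apply: functional_extensionality => n.
elim: n {-2}n (leqnn n) => [|N IH] n Hn.
  have -> : n = 0 by lia.
  by rewrite HX HY /addf /conv !big_ord_recl !big_ord0 u0.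
rewrite HX HY /addf /conv; congr (_ + _); apply: eq_bigr => i _.
case: (nat_of_ord i) => [|j]; first by rewrite u0.
rewrite IH //; lia.
Qed.

Lemma C0 g k n : n < k -> cc g k n = 0.
Proof.
case: k => [//|k] /= H.
have -> : n - k = 0 by lia.
by rewrite big_geq.
Qed.

Lemma C1 g k : cc g k.+1 = conv (zf g) (cc g k).
Proof.
apply: functional_extensionality => n; rewrite /conv /=.
rewrite -(big_mkord xpredT (fun i => zf g i * cc g k (n - i))).
rewrite [RHS]big_ltn //= add0n.
rewrite [RHS](@big_cat_nat _ _ _ (n - k).+1) //=; last by rewrite ltnS leq_subr.
have Z : \sum_((n - k).+1 <= i < n.+1) zf g i * cc g k (n - i) = 0.
  rewrite big_nat_cond big1 // => i /andP [/andP [Hi1 Hi2] _]; rewrite C0 ?muln0 //; lia.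
rewrite Z addn0.
apply: eq_big_nat => i /andP [Hi _]; case: i Hi => //.
Qed.

Lemma stab g n j : j <= n -> inv_aux g n j = inv_aux g j j.
Proof.
elim: n j => [|n IH] j Hj; first by have -> : j = 0 by lia.
rewrite /=; case: ifP => H; first exact: IH.
have E : j = n.+1 by lia.
by subst j; rewrite /= ltnn.
Qed.

Lemma invE g : zf (invert g) = addf (zf g) (conv (zf g) (zf (invert g))).
Proof.
apply: functional_extensionality => n; rewrite /addf /conv.
case: n => [|n]; first by rewrite big_ord1.
rewrite /= /invert /= ltnn; congr (_ + _).
rewrite big_ord_recr /= subnn muln0 addn0.
rewrite -(big_mkord xpredT (fun i => zf g i * zf (fun n0 => inv_aux g n0 n0) (n.+1 - i))).
rewrite [RHS]big_ltn //= add0n; apply: eq_big_nat => i /andP [Hi1 Hi2].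
case: i Hi1 Hi2 => // i _ Hi2.
rewrite stab; last lia.
by rewrite subSS; case: (n - i).
Qed.

Lemma sumP r q n : r <= q -> \sum_(t < n.+1) 'C(n - t + r, q) = 'C(n + r + 1, q.+1).
Proof.
move=> Hrq; elim: n => [|n IH].
  by rewrite big_ord1 /= add0n addn1 binS (bin_small (_ : r < q.+1)) // ltnS.
rewrite big_ord_recl /=.
rewrite (eq_bigr (fun i : 'I_n.+1 => 'C(n - i + r, q))); last by move=> i _; rewrite subSS.
rewrite IH.
have -> : n.+1 + r + 1 = (n + r + 1).+1 by lia.
rewrite binS addnC; congr (_ + 'C(_, _)); lia.
Qed.

Lemma sumL r q n : r <= q -> \sum_(t < n.+1) t * 'C(n - t + r, q) = 'C(n + r + 1, q.+2).
Proof.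
move=> Hrq; elim: n => [|n IH].
  by rewrite big_ord1 /= mul0n add0n addn1 bin_small // !ltnS.
rewrite big_ord_recl /= mul0n add0n.
rewrite (eq_bigr (fun i : 'I_n.+1 => i * 'C(n - i + r, q) + 'C(n - i + r, q))); last first.
  by move=> i _; rewrite subSS mulSn addnC.
by rewrite big_split /= IH sumP.
Qed.

Lemma zf0 f0 : (forall i, 1 <= i -> f0 i = i) -> zf f0 = F0.
Proof.
move=> hf0; apply: functional_extensionality => n; case: n => [//|n] /=.
by rewrite hf0.
Qed.

Lemma Ebin f0 : (forall i, 1 <= i -> f0 i = i) ->
  forall k n, cc f0 k.+1 n = 'C(n + k, k.*2.+1).
Proof.
move=> hf0; elim=> [|k IH] n.
  by rewrite C1 zf0 // (_ : cc f0 0 = d0) // conv1 addn0 bin1.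
rewrite C1 zf0 // /conv /F0.
rewrite (eq_bigr (fun t : 'I_n.+1 => t * 'C(n - t + k, k.*2.+1))); last by move=> t _; rewrite IH.
rewrite sumL; last by rewrite -addnn; lia.
rewrite doubleS; congr 'C(_, _); lia.
Qed.

Definition W (a k i : nat) : nat :=
  match k with
  | 0 => (i == 0 : nat)
  | k'.+1 => match i with 0 => 0 | i'.+1 => a ^ (i' - k') * 'C(i', k') end
  end.

Definition T (f0 : nat -> nat) (a k : nat) : nat -> nat :=
  fun n => \sum_(i < n.+1) W a k i * cc f0 i n.

Lemma Wrec a k i : W a k.+1 i.+1 = W a k i + a * W a k.+1 i.
Proof.
case: k => [|k] /=.
  case: i => [|i]; first by rewrite subnn expn0 bin0 muln0.
  by rewrite !subn0 !bin0 !muln1 add0n expnS.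
case: i => [|i] /=; first by rewrite muln0 bin_small.
rewrite binS mulnDr addnC; congr (_ + _).
case: (leqP i k) => H.
  by rewrite !bin_small ?muln0 //; lia.
rewrite mulnA -expnS; congr (_ ^ _ * _); lia.
Qed.

Lemma Text f0 a k n N : n < N -> T f0 a k n = \sum_(i < N) W a k i * cc f0 i n.
Proof.
move=> HN; rewrite /T (big_ord_widen _ (fun i => W a k i * cc f0 i n) HN) big_mkcond /=.
apply: eq_bigr => i _; case: ifP => // H.
by rewrite C0 ?muln0 // ltnNge -ltnS H.
Qed.

Lemma conv_loc u X Y n : (forall j, j <= n -> X j = Y j) -> conv u X n = conv u Y n.
Proof.
move=> H; rewrite /conv; apply: eq_bigr => i _; by rewrite H // leq_subr.
Qed.

Lemma convE f0 (hf0 : forall i, 1 <= i -> f0 i = i) a k n :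
  conv F0 (T f0 a k) n = \sum_(i < n.+1) W a k i * cc f0 i.+1 n.
Proof.
rewrite (conv_loc F0 (T f0 a k) (fun j => \sum_(i < n.+1) W a k i * cc f0 i j)); last first.
  by move=> j Hj; rewrite (@Text _ _ _ _ n.+1).
rewrite /conv.
rewrite (eq_bigr (fun t : 'I_n.+1 => \sum_(i < n.+1) F0 t * (W a k i * cc f0 i (n - t)))); last first.
  by move=> t _; rewrite big_distrr.
rewrite exchange_big; apply: eq_bigr => i _.
rewrite C1 zf0 // /conv big_distrr /=; apply: eq_bigr => t _.
by rewrite mulnCA.
Qed.

Lemma Rrec f0 (hf0 : forall i, 1 <= i -> f0 i = i) a k :
  T f0 a k.+1 = addf (conv F0 (T f0 a k)) (sclf a (conv F0 (T f0 a k.+1))).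
Proof.
apply: functional_extensionality => n; rewrite /addf /sclf !convE //.
rewrite big_distrr -big_split /=.
rewrite (eq_bigr (fun i : 'I_n.+1 => W a k.+1 i.+1 * cc f0 i.+1 n)); last first.
  by move=> i _; rewrite Wrec mulnDl mulnA.
rewrite /T big_ord_recl [RHS]big_ord_recr.
rewrite [W a k.+1 ord0]/= mul0n add0n.
rewrite (@C0 f0 (ord_max : 'I_n.+1).+1 n) //= muln0 addn0.
by apply: eq_bigr => i _; rewrite add0n.
Qed.

Lemma T0 f0 a : T f0 a 0 = d0.
Proof.
apply: functional_extensionality => n; rewrite /T big_ord_recl /= mul1n big1 ?addn0 //.
Qed.

Lemma T1rec f0 (hf0 : forall i, 1 <= i -> f0 i = i) a :
  T f0 a 1 = addf F0 (sclf a (conv F0 (T f0 a 1))).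
Proof. by rewrite {1}Rrec // T0 conv1. Qed.

Lemma Ya f0 (hf0 : forall i, 1 <= i -> f0 i = i) a : zf (fseq f0 a) = T f0 a 1.
Proof.
elim: a => [|a IH].
  rewrite /fseq /= zf0 //; apply: functional_extensionality => n.
  by rewrite (@T1rec f0 hf0 0) /addf /sclf mul0n addn0.
set G := T f0 a 1.
have G0 : G 0 = 0 by rewrite /G /T big_ord1.
have HG : G = addf F0 (sclf a (conv F0 G)) by rewrite /G {1}T1rec.
set H := T f0 a.+1 1.
have HH : H = addf F0 (sclf a.+1 (conv F0 H)) by rewrite /H {1}T1rec.
have eGH : conv G H = addf (conv F0 G) (sclf a.+1 (conv (conv F0 G) H)).
  by rewrite {1}HH convDr convZr convA (convC G F0).
have HX : H = addf G (conv G H).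
  apply: (@conv_uniq (sclf a.+1 F0) F0); first by rewrite /sclf muln0.
    by rewrite convZl.
  rewrite convZl convDr convA eGH.
  apply: functional_extensionality => n.
  rewrite /addf /sclf {1}HG /addf /sclf; lia.
have HY := invE (fseq f0 a).
rewrite /fseq iterS -/(fseq f0 a) IH -/G in HY *.
apply: (@conv_uniq G G) => //.
Qed.

Lemma ccT f0 (hf0 : forall i, 1 <= i -> f0 i = i) a k : cc (fseq f0 a) k = T f0 a k.
Proof.
elim: k => [|k IH]; first by rewrite T0.
rewrite C1 Ya // IH.
apply: (@conv_uniq (sclf a F0) (conv F0 (T f0 a k))); first by rewrite /sclf muln0.
  rewrite {1}T1rec // convDl !convZl convA.
  by [].
by rewrite convZl -Rrec.
Qed.

Theorem corollary26 (f0 : nat -> nat) (hf0 : forall i, 1 <= i -> f0 i = i) :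
  (forall n k, 1 <= k <= n -> cm f0 1 n k = 'C(n + k - 1, 2 * k - 1)) /\
  (forall m n k, 1 <= m -> 1 <= k <= n ->
     cm f0 m n k =
     \sum_(k <= i < n.+1) (m - 1) ^ (i - k) * 'C(i - 1, k - 1) * 'C(n + i - 1, 2 * i - 1)).
Proof.
split.
  move=> n [|k] // _; rewrite /cm (_ : fseq f0 1.-1 = f0) // Ebin //; congr 'C(_, _); lia.
move=> m n [|k] Hm // /andP [_ Hkn].
rewrite /cm ccT // /T -(big_mkord xpredT (fun i => W m.-1 k.+1 i * cc f0 i n)).
rewrite (@big_cat_nat _ _ _ k.+1) //; last lia.
rewrite big_nat_cond big1 ?add0n; last first.
  move=> [|i] // /andP [/andP [_ Hi] _] /=.
  by rewrite bin_small ?muln0 ?mul0n //.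
apply: eq_big_nat => -[|i] // /andP [Hi _].
rewrite Ebin // [W _ _ _]/= subSS subn1 !subn1 /= -!mulnA.
congr (_ * (_ * 'C(_, _))); lia.
Qed.
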